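(* Let $d\ge3$ be an integer and $0<\beta<\beta_{\mathrm{KS}}=\log\left(\frac{\sqrt{d-1}+1}{\sqrt{d-1}-1}\right)$. For $\alpha\in(-1,1)$ let $z=\sqrt{(1+e^{-2\beta})^2-\alpha^2(1-e^{-2\beta})^2}$, \begin{align*} G(\alpha,\beta)&=2\log2-\log\big((1+e^{-2\beta})(1-e^{-2\beta})^2\big)-(1+\alpha)\log(1+\alpha)-(1-\alpha)\log(1-\alpha)\\ &\quad+\frac{1+\alpha}{2}\log\Big((1+e^{-2\beta})^2+\alpha(1-e^{-2\beta})^2-2e^{-\beta}z\Big)+\frac{1-\alpha}{2}\log\Big((1+e^{-2\beta})^2-\alpha(1-e^{-2\beta})^2-2e^{-\beta}z\Big), \end{align*} and \[ f_d(\alpha,\beta)=\log2+H\!\left(\frac{1+\alpha}{2}\right)-\frac d2\,G(\alpha,\beta), \] where $H(p)=-p\log p-(1-p)\log(1-p)$. Then $\arg\max_{-1<\alpha<1}f_d(\alpha,\beta)=0$. *)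

(* Defs.v *)
From Stdlib Require Import Reals.
Open Scope R_scope.

Definition beta_KS (d : nat) : R :=
  ln ((sqrt (INR d - 1) + 1) / (sqrt (INR d - 1) - 1)).

Definition Hent (p : R) : R := - p * ln p - (1 - p) * ln (1 - p).

Definition zfun (a b : R) : R :=
  sqrt ((1 + exp (-2*b))^2 - a^2 * (1 - exp (-2*b))^2).

Definition Gfun (a b : R) : R :=
  2 * ln 2
  - ln ((1 + exp (-2*b)) * (1 - exp (-2*b))^2)
  - (1 + a) * ln (1 + a) - (1 - a) * ln (1 - a)
  + (1 + a) / 2 * ln ((1 + exp (-2*b))^2 + a * (1 - exp (-2*b))^2
                      - 2 * exp (- b) * zfun a b)
  + (1 - a) / 2 * ln ((1 + exp (-2*b))^2 - a * (1 - exp (-2*b))^2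
                      - 2 * exp (- b) * zfun a b).

Definition f_d (d : nat) (a b : R) : R :=
  ln 2 + Hent ((1 + a) / 2) - INR d / 2 * Gfun a b.

(* Main.v *)
Require Import Defs.
From Stdlib Require Import Reals Lra Psatz Lia.
From Coquelicot Require Import Coquelicot.
Open Scope R_scope.

Definition U t x := sqrt ((1+x) + t*t*(1-x)).
Definition V t x := sqrt ((1-x) + t*t*(1+x)).

Lemma UV_facts t x : 0 < t < 1 -> -1 < x < 1 ->
  0 < U t x /\ 0 < V t x /\ U t x * U t x = (1+x) + t*t*(1-x) /\
  V t x * V t x = (1-x) + t*t*(1+x) /\ 0 < U t x - t * V t x /\ 0 < V t x - t * U t x.
Proof.
  intros Ht Hx.
  assert (Hw : 0 < t*t < 1) by (split; nra).
  assert (Hw2 : t*t*(t*t) < 1) by nra.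
  assert (HA : 0 < (1+x) + t*t*(1-x)) by nra.
  assert (HB : 0 < (1-x) + t*t*(1+x)) by nra.
  assert (HU: 0 < U t x) by (apply sqrt_lt_R0; lra).
  assert (HV: 0 < V t x) by (apply sqrt_lt_R0; lra).
  assert (HUs: U t x * U t x = (1+x) + t*t*(1-x)) by (apply sqrt_sqrt; lra).
  assert (HVs: V t x * V t x = (1-x) + t*t*(1+x)) by (apply sqrt_sqrt; lra).
  set (u := U t x) in *; set (v := V t x) in *.
  repeat split; auto.
  - assert ((u - t*v)*(u+t*v) = (1+x)*(1-t*t*(t*t))).
    { transitivity (u*u - t*t*(v*v)); [ring|]. rewrite HUs, HVs. ring. }
    assert (0 < (1+x)*(1-t*t*(t*t))) by (apply Rmult_lt_0_compat; nra).
    nra.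
  - assert ((v - t*u)*(v+t*u) = (1-x)*(1-t*t*(t*t))).
    { transitivity (v*v - t*t*(u*u)); [ring|]. rewrite HUs, HVs. ring. }
    assert (0 < (1-x)*(1-t*t*(t*t))) by (apply Rmult_lt_0_compat; nra).
    nra.
Qed.

Lemma keyZ (t x u v : R) : u * u = (1+x) + t*t*(1-x) -> v * v = (1-x) + t*t*(1+x) ->
  0 < u -> 0 < v -> 0 < u - t * v -> 0 < v - t * u ->
  (1 + x) *
   (((1 + t * t * - (1)) * / (2 * u) +
     - (t * ((- (1) + t * t * 1) * / (2 * v)))) * / (u + - (t * v))) +
  (1 + - x) *
     (((- (1) + t * t * 1) * / (2 * v) +
      - (t * ((1 + t * t * - (1)) * / (2 * u)))) * / (v + - (t * u))) = 0.
Proof.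
  intros HU HV Hu Hv H1 H2.
  replace ((1 + x) *
   (((1 + t * t * - (1)) * / (2 * u) +
     - (t * ((- (1) + t * t * 1) * / (2 * v)))) * / (u + - (t * v))) +
  (1 + - x) *
     (((- (1) + t * t * 1) * / (2 * v) +
      - (t * ((1 + t * t * - (1)) * / (2 * u)))) * / (v + - (t * u))))
  with ((1-t*t)/(2*u*v*(u-t*v)*(v-t*u)) * ((1+x)*(v*v - t*t*(u*u)) - (1-x)*(u*u - t*t*(v*v)))).
  - rewrite HU, HV. ring.
  - field. repeat split; lra.
Qed.

Definition Zx t x u v :=
  (1 + x) *
   (((1 + t * t * - (1)) * / (2 * u) +
     - (t * ((- (1) + t * t * 1) * / (2 * v)))) * / (u + - (t * v))) +
  (1 + - x) *
     (((- (1) + t * t * 1) * / (2 * v) +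
      - (t * ((1 + t * t * - (1)) * / (2 * u)))) * / (v + - (t * u))).

Definition K (d t x : R) := (d-1)/2 * ((1+x)*ln(1+x) + (1-x)*ln(1-x))
  - d/2 * ((1+x)*ln (U t x - t * V t x) + (1-x)*ln (V t x - t * U t x)).
Definition Kd (d t x : R) := (d-1)/2 * (ln(1+x) - ln(1-x))
  - d/2 * (ln (U t x - t * V t x) - ln (V t x - t * U t x)).

Lemma derK d t x : 0 < t < 1 -> -1 < x < 1 -> is_derive (K d t) x (Kd d t x).
Proof.
  intros Ht Hx.
  destruct (UV_facts t x Ht Hx) as (Hu & Hv & HU & HV & H1 & H2).
  assert (H : is_derive (K d t) x (Kd d t x - d/2 * Zx t x (U t x) (V t x))).
  { unfold K, U, V. auto_derive.
    - unfold U, V in *. unfold Rminus in *. assert (0 <= t*t) by nra. repeat split; try lra; nra.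
    - unfold Kd, Zx. unfold U, V in *. unfold Rminus in *. field.
      repeat split; lra. }
  unfold Zx in H. rewrite keyZ in H; auto.
  replace (Kd d t x) with (Kd d t x - d / 2 * 0) by ring. exact H.
Qed.

Definition kk t := (1+t)^2/(1+t*t).
Definition Mf t x := 2 * (ln (U t x - t * V t x) - ln (V t x - t * U t x))
  - kk t * (ln (1+x) - ln (1-x)).
Definition Md t x :=
  let u := U t x in let v := V t x in
  2 * ((1-t*t)/(2*u*v*(u-t*v)*(v-t*u)) * ((v+t*u)*(v-t*u) + (u+t*v)*(u-t*v)))
  - kk t * (/(1+x) + /(1-x)).

Lemma derM t x : 0 < t < 1 -> -1 < x < 1 -> is_derive (Mf t) x (Md t x).
Proof.
  intros Ht Hx.
  destruct (UV_facts t x Ht Hx) as (Hu & Hv & HU & HV & H1 & H2).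
  unfold Mf, Md, U, V. auto_derive.
  - unfold U, V in *. unfold Rminus in *. assert (0 <= t*t) by nra. repeat split; try lra; nra.
  - unfold U, V in *. unfold Rminus in *. field. repeat split; try lra.
Qed.

Lemma finalM t x P : 0 < t < 1 -> -1 < x < 1 ->
  P * P = (1+x)*(1-x)*(1-t*t)^2 + 4*t*t -> 0 < P - 2*t -> 0 < P ->
  0 <= 2*(1-t*t)^2/(P*(P-2*t)) - kk t * (/(1+x) + /(1-x)).
Proof.
  intros Ht Hx HP H1 H2.
  assert (Hpq : 0 < (1+x)*(1-x)) by nra.
  assert (Hle : P <= 1 + t*t).
  { assert (Hq : (1+x)*(1-x) <= 1) by nra.
    assert (P*P <= (1+t*t)*(1+t*t)).
    { rewrite HP. assert (0 <= (1-t*t)^2) by (apply pow2_ge_0).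
      assert ((1+x)*(1-x)*(1-t*t)^2 <= (1-t*t)^2) by (rewrite <- (Rmult_1_l ((1-t*t)^2)) at 2; apply Rmult_le_compat_r; lra).
      nra. }
    nra. }
  replace (2*(1-t*t)^2/(P*(P-2*t)) - kk t * (/(1+x) + /(1-x)))
    with ((2*((1+x)*(1-x)*(1-t*t)^2) - 2*kk t * (P*(P-2*t))) / (P*(P-2*t)*((1+x)*(1-x)))).
  2:{ unfold kk. field. repeat split; try lra; nra. }
  apply Rmult_le_pos.
  2:{ left. apply Rinv_0_lt_compat. apply Rmult_lt_0_compat; [apply Rmult_lt_0_compat|]; lra. }
  replace ((1+x)*(1-x)*(1-t*t)^2) with (P*P - 4*t*t) by lra.
  replace (2 * (P * P - 4 * t * t) - 2 * kk t * (P * (P - 2 * t)))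
    with (4*t/(1+t*t) * ((P - 2*t)*(1+t*t-P))).
  2:{ unfold kk. field. nra. }
  apply Rmult_le_pos.
  - apply Rmult_le_pos; [lra|]. left; apply Rinv_0_lt_compat; nra.
  - apply Rmult_le_pos; lra.
Qed.

Lemma Md_nonneg t x : 0 < t < 1 -> -1 < x < 1 -> 0 <= Md t x.
Proof.
  intros Ht Hx.
  destruct (UV_facts t x Ht Hx) as (Hu & Hv & HU & HV & H1 & H2).
  unfold Md. set (u := U t x) in *; set (v := V t x) in *.
  assert (HP2 : (u*v)*(u*v) = (1+x)*(1-x)*(1-t*t)^2 + 4*t*t).
  { transitivity ((u*u)*(v*v)); [ring|]. rewrite HU, HV. ring. }
  assert (Hs : (u - t*v)*(v - t*u) = (1+t*t)*(u*v - 2*t)).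
  { transitivity ((1+t*t)*(u*v) - t*(u*u + v*v)); [ring|]. rewrite HU, HV. ring. }
  assert (Hbr : (v+t*u)*(v-t*u) + (u+t*v)*(u-t*v) = 2*(1-t*t)*(1+t*t)).
  { transitivity ((1 - t*t)*(u*u + v*v)); [ring|]. rewrite HU, HV. ring. }
  assert (HPt : 0 < u*v - 2*t).
  { assert (0 < (u - t*v)*(v - t*u)) by (apply Rmult_lt_0_compat; lra).
    assert (0 < 1 + t*t) by nra. 
    rewrite Hs in H. apply Rmult_lt_reg_l with (1+t*t); lra. }
  rewrite Hbr.
  replace (2*u*v*(u-t*v)*(v-t*u)) with (2*(u*v)*((u-t*v)*(v-t*u))) by ring.
  rewrite Hs.
  replace (2 * ((1 - t * t) / (2 * (u * v) * ((1 + t * t) * (u * v - 2 * t))) *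
      (2 * (1 - t * t) * (1 + t * t)))) with (2*(1-t*t)^2/((u*v)*(u*v-2*t))).
  2:{ field. repeat split; try lra; nra. }
  apply finalM; auto.
  apply Rmult_lt_0_compat; lra.
Qed.

Lemma Mf0 t : Mf t 0 = 0.
Proof.
  unfold Mf, U, V.
  replace (1 - 0 + t*t*(1+0)) with (1 + 0 + t*t*(1-0)) by ring.
  replace (1 - 0) with (1 + 0) by ring. ring.
Qed.

Lemma M_sign t x : 0 < t < 1 -> -1 < x < 1 -> 0 <= x * Mf t x.
Proof.
  intros Ht Hx.
  destruct (Rtotal_order x 0) as [Hn|[He|Hp]].
  - destruct (MVT_cor2 (Mf t) (Md t) x 0 Hn) as (c & Hc & Hc2).
    { intros c Hc. apply is_derive_Reals, derM; auto; lra. }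
    rewrite Mf0 in Hc.
    assert (0 <= Md t c) by (apply Md_nonneg; auto; lra).
    nra.
  - subst. lra.
  - destruct (MVT_cor2 (Mf t) (Md t) 0 x Hp) as (c & Hc & Hc2).
    { intros c Hc. apply is_derive_Reals, derM; auto; lra. }
    rewrite Mf0 in Hc.
    assert (0 <= Md t c) by (apply Md_nonneg; auto; lra).
    nra.
Qed.

Lemma L_sign x : -1 < x < 1 -> x <> 0 -> 0 < x * (ln (1+x) - ln (1-x)).
Proof.
  intros Hx H0.
  destruct (Rtotal_order x 0) as [Hn|[He|Hp]].
  - assert (ln (1+x) < ln (1-x)) by (apply ln_increasing; lra). nra.
  - contradiction.
  - assert (ln (1-x) < ln (1+x)) by (apply ln_increasing; lra). nra.
Qed.

Lemma Kd_sign d t x : 0 < t < 1 -> -1 < x < 1 -> x <> 0 -> 0 < d ->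
  2*(d-1) < d * kk t -> x * Kd d t x < 0.
Proof.
  intros Ht Hx H0 Hd Hc.
  assert (E : Kd d t x = (ln (1+x) - ln (1-x)) * ((d-1)/2 - d * kk t / 4) - d/4 * Mf t x).
  { unfold Kd, Mf. field. }
  rewrite E.
  pose proof (M_sign t x Ht Hx). pose proof (L_sign x Hx H0).
  set (L := ln (1+x) - ln (1-x)) in *.
  set (M := Mf t x) in *.
  assert (Hn : (d-1)/2 - d * kk t / 4 < 0) by lra.
  assert (0 <= d/4 * (x*M)) by (apply Rmult_le_pos; lra).
  assert ((x*L) * ((d-1)/2 - d * kk t / 4) < 0).
  { assert (0 < (x*L) * (-((d-1)/2 - d * kk t / 4))) by (apply Rmult_lt_0_compat; lra). lra. }
  replace (x * (L * ((d - 1) / 2 - d * kk t / 4) - d / 4 * M))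
    with ((x*L) * ((d-1)/2 - d * kk t / 4) - d/4 * (x*M)) by ring.
  lra.
Qed.

Lemma K_strict d t a : 0 < t < 1 -> -1 < a < 1 -> a <> 0 -> 0 < d ->
  2*(d-1) < d * kk t -> K d t a < K d t 0.
Proof.
  intros Ht Ha H0 Hd Hc.
  destruct (Rtotal_order a 0) as [Hn|[He|Hp]].
  - destruct (MVT_cor2 (K d t) (Kd d t) a 0 Hn) as (c & Hc1 & Hc2).
    { intros c Hc'. apply is_derive_Reals, derK; auto; lra. }
    assert (c * Kd d t c < 0) by (apply Kd_sign; auto; lra).
    assert (0 < Kd d t c) by nra.
    nra.
  - contradiction.
  - destruct (MVT_cor2 (K d t) (Kd d t) 0 a Hp) as (c & Hc1 & Hc2).
    { intros c Hc'. apply is_derive_Reals, derK; auto; lra. }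
    assert (c * Kd d t c < 0) by (apply Kd_sign; auto; lra).
    assert (Kd d t c < 0) by nra.
    nra.
Qed.

Lemma fd_K d a b : -1 < a < 1 -> 0 < b ->
  f_d d a b = 2*ln 2 - INR d/2*(2*ln 2 - ln((1+exp (-b)*exp (-b))*(1-exp (-b)*exp (-b))^2))
              + K (INR d) (exp (-b)) a.
Proof.
  intros Ha Hb.
  assert (Hw : exp (-2*b) = exp (-b) * exp (-b)).
  { rewrite <- exp_plus. f_equal. ring. }
  assert (Ht : 0 < exp (-b) < 1).
  { split. apply exp_pos. rewrite <- exp_0. apply exp_increasing. lra. }
  unfold f_d, Gfun, zfun, Hent. rewrite Hw.
  set (t := exp (-b)) in *.
  destruct (UV_facts t a Ht Ha) as (Hu & Hv & HU & HV & H1 & H2).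
  assert (Hz : sqrt ((1 + t*t)^2 - a^2*(1-t*t)^2) = U t a * V t a).
  { unfold U, V. rewrite <- sqrt_mult by nra. f_equal. ring. }
  rewrite Hz.
  assert (HT1 : (1 + t*t)^2 + a*(1-t*t)^2 - 2*t*(U t a * V t a)
              = (U t a - t * V t a) * (U t a - t * V t a)).
  { transitivity (U t a * U t a + t*t*(V t a * V t a) - 2*t*(U t a * V t a)).
    rewrite HU, HV. ring. ring. }
  assert (HT2 : (1 + t*t)^2 - a*(1-t*t)^2 - 2*t*(U t a * V t a)
              = (V t a - t * U t a) * (V t a - t * U t a)).
  { transitivity (V t a * V t a + t*t*(U t a * U t a) - 2*t*(U t a * V t a)).
    rewrite HU, HV. ring. ring. }
  rewrite HT1, HT2, (ln_mult (U t a - t * V t a)), (ln_mult (V t a - t * U t a)) by lra.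
  replace (1 - (1+a)/2) with ((1-a)/2) by field.
  rewrite !ln_div by lra.
  unfold K. field.
Qed.

Lemma KS_cond d b : (3 <= d)%nat -> 0 < b -> b < beta_KS d ->
  2*(INR d - 1) < INR d * kk (exp (-b)).
Proof.
  intros Hd Hb Hks.
  assert (Hd3 : 3 <= INR d) by (replace 3 with (INR 3) by (simpl; ring); apply le_INR; lia).
  set (D := INR d - 1).
  assert (HD : 2 <= D) by (unfold D; lra).
  set (m := sqrt D).
  assert (Hm2 : m * m = D) by (apply sqrt_sqrt; lra).
  assert (Hm0 : 0 <= m) by apply sqrt_pos.
  assert (Hm1 : 1 < m) by nra.
  unfold beta_KS in Hks. fold D in Hks. fold m in Hks.
  assert (Hq : 0 < (m+1)/(m-1)) by (apply Rdiv_lt_0_compat; lra).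
  assert (He : exp b < (m+1)/(m-1)).
  { rewrite <- (exp_ln ((m+1)/(m-1))) by exact Hq. apply exp_increasing; exact Hks. }
  assert (Ht : 0 < exp (-b) < 1).
  { split. apply exp_pos. rewrite <- exp_0. apply exp_increasing. lra. }
  assert (Htb : exp (-b) * exp b = 1).
  { rewrite <- exp_plus. replace (-b+b) with 0 by ring. apply exp_0. }
  set (t := exp (-b)) in *.
  assert (Heb : 0 < exp b) by apply exp_pos.
  assert (H1 : (m-1) * exp b < m+1).
  { apply (Rmult_lt_compat_r (m-1)) in He; [|lra].
    replace ((m+1)/(m-1)*(m-1)) with (m+1) in He by (field; lra). lra. }
  assert (H2 : m - 1 < (m+1)*t).
  { apply (Rmult_lt_compat_r t) in H1; [|lra].
    replace ((m-1)*exp b * t) with (m-1) in H1 by (rewrite Rmult_assoc, (Rmult_comm (exp b)), Htb; ring). lra. }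
  assert (H3 : m*(1-t) < 1+t) by lra.
  assert (H4 : D*((1-t)*(1-t)) < (1+t)*(1+t)).
  { rewrite <- Hm2. assert (0 <= m*(1-t)) by nra. nra. }
  replace (INR d) with (D+1) by (unfold D; ring).
  unfold kk.
  apply Rmult_lt_reg_r with (1+t*t); [nra|].
  replace ((D + 1) * ((1 + t) ^ 2 / (1 + t * t)) * (1 + t * t)) with ((D+1)*(1+t)^2) by (field; nra).
  nra.
Qed.

Theorem lemma8p3 (d : nat) (beta : R) :
  (3 <= d)%nat -> 0 < beta -> beta < beta_KS d ->
  forall a : R, -1 < a < 1 -> a <> 0 -> f_d d a beta < f_d d 0 beta.
Proof.
  intros Hd Hb Hks a Ha H0.
  rewrite (fd_K d a beta Ha Hb), (fd_K d 0 beta) by lra.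
  apply Rplus_lt_compat_l.
  apply K_strict; auto.
  - split. apply exp_pos. rewrite <- exp_0. apply exp_increasing. lra.
  - assert (3 <= INR d) by (replace 3 with (INR 3) by (simpl; ring); apply le_INR; lia). lra.
  - apply KS_cond; auto.
Qed.
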